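(* Let $x$ be an allocation rule and suppose Assumptions D, X and T hold. Fix $i$ and $\theta$ with $0<X_i(\theta)<1$. Let $\bar t_i^w(\theta),\bar t_i^l(\theta)\in\mathbb{R}$ satisfy $\alpha\bar t_i^w(\theta)-\beta\bar t_i^l(\theta)\le K$ and $\theta-\bar t_i^w(\theta)<-\bar t_i^l(\theta)$, and let $\bar t_i(\theta,\cdot):=\bar t_i^w(\theta)x_i(\theta,\cdot)+\bar t_i^l(\theta)(1-x_i(\theta,\cdot))$. Then there exist $\widetilde t_i^w(\theta),\widetilde t_i^l(\theta)\in\mathbb{R}$ such that, with $\widetilde t_i(\theta,\cdot):=\widetilde t_i^w(\theta)x_i(\theta,\cdot)+\widetilde t_i^l(\theta)(1-x_i(\theta,\cdot))$: (i) $\widetilde T_i(\theta)\ge\bar T_i(\theta)$; (ii) $\widetilde U_i^{\min}(\theta)=\bar U_i^{\min}(\theta)$; (iii) $\alpha\widetilde t_i^w(\theta)-\beta\widetilde t_i^l(\theta)\le K$; (iv) $\theta-\widetilde t_i^w(\theta)=-\widetilde t_i^l(\theta)$. Here for an interim transfer $s(\cdot)$ (either $\bar t_i(\theta,\cdot)$ or $\widetilde t_i(\theta,\cdot)$) the interim revenue is $\int_\Theta s(\theta')dP(\theta')$ and the interim worst-case utility is $\inf_Q\{\int_\Theta[\theta x_i(\theta,\theta')-s(\theta')]dQ(\theta'):D(Q\|P)\le\eta\}$.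
   Context: $\Theta=[\underline\theta,\bar\theta]$ with $0<\underline\theta<\bar\theta$, Borel $\sigma$-algebra $\mathcal{B}$; ''$\sigma$-algebra'' means sub-$\sigma$-algebra of $\mathcal{B}$; $\Delta(\Theta,\mathcal{A})$ is the set of probability measures on $(\Theta,\mathcal{A})$; $P_{\mathcal{E}}$ is restriction. A divergence $D$ assigns to each pair $Q,P$ of probability measures on a common $\sigma$-algebra a value in $[0,\infty]$. Assumption D: for every $\sigma$-algebra $\mathcal{A}$, $P,Q\in\Delta(\Theta,\mathcal{A})$: (D1) $D(Q\|P)=0$ if $Q=P$; (D2) if $Q\ll P$ with bounded $dQ/dP$, $\epsilon\mapsto D(\epsilon Q+(1-\epsilon)P\|P)$ is continuous on $[0,1]$; (D3) $D(Q\|P)<\infty\Rightarrow Q\ll P$; (D4) $D(Q_{\mathcal{E}}\|P_{\mathcal{E}})\le D(Q\|P)$ for sub-$\sigma$-algebras $\mathcal{E}\subset\mathcal{A}$; (D5) equality in (D4) when $dQ_{\mathcal{E}}/dP_{\mathcal{E}}=dQ/dP$ $P$-a.e. Fix atomless $P\in\Delta(\Theta,\mathcal{B})$ and $\eta>0$; $Q$ ranges over $\Delta(\Theta,\mathcal{B})$. Two bidders $i\in\{1,2\}$; an allocation rule is bounded measurable $x=(x_1,x_2):\Theta^2\to\mathbb{R}^2$ with $x_1(\theta,\theta')\ge0$, $x_2(\theta',\theta)\ge0$, $x_1(\theta,\theta')+x_2(\theta',\theta)\le1$. $X_i(\theta)=\int x_i(\theta,\theta')dP(\theta')$, $X_i^{\min}(\theta)=\inf_Q\{\int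 x_i(\theta,\theta')dQ(\theta'):D(Q\|P)\le\eta\}$. Assumption X: (i) $x_i(\theta,\theta')\in\{0,1\}$ for $\theta'\ne\theta$; (ii) $X_i(\theta)=1\Rightarrow\theta=\bar\theta$; (iii) $X_i^{\min}$ non-decreasing. Assumption T: constants $0\le\alpha\le\beta\le1$ and $K\ge0$ are given (they define the class of transfer rules $t$ with $\alpha t_i(\theta,\theta^w)-\beta t_i(\theta,\theta^l)\le K$ whenever $\theta<\bar\theta$, $x_i(\theta,\theta^w)=1$, $x_i(\theta,\theta^l)=0$). *)

(* Defs.v *)
From HB Require Import structures.
From mathcomp Require Import all_boot all_order all_algebra.
From mathcomp Require Import all_classical all_reals all_analysis.
Set Implicit Arguments. Unset Strict Implicit. Unset Printing Implicit Defensive.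
Import Order.TTheory GRing.Theory Num.Theory.
Local Open Scope classical_set_scope.
Local Open Scope ring_scope.

Section ThetaSpace.
Variables (R : realType) (a b : R) (hab : a < b).

(* carrier of Theta = [a, b]; the proof hab is only used to provide a point *)
Definition ThetaC (_ : a < b) := {x : R | a <= x <= b}.

Lemma ThetaC_pt_proof : a <= a <= b.
Proof. by rewrite lexx /= ltW. Qed.

HB.instance Definition _ := Choice.on (ThetaC hab).
HB.instance Definition _ :=
  isPointed.Build (ThetaC hab) (exist _ a ThetaC_pt_proof).

Definition BorTheta : set (set (ThetaC hab)) :=
  preimage_set_system setT (@sval R (fun x => a <= x <= b)) measurable.

Definition Theta := g_sigma_algebraType BorTheta.

End ThetaSpace.

Section Model.
Variables (R : realType) (a b : R) (hab : a < b).
Local Notation T := (Theta hab).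
Local Open Scope ereal_scope.

(* "sigma-algebra" = sub-sigma-algebra of the Borel sigma-algebra of Theta *)
Definition sub_sigma (A : set (set T)) : Prop :=
  sigma_algebra setT A /\ A `<=` (measurable : set (set T)).

Definition PM (A : set (set T)) := probability (g_sigma_algebraType A) R.

(* a divergence: a value for each pair Q, P of probability measures on a
   common sigma-algebra; D A Q P stands for D(Q || P) *)
Definition divergence := forall A : set (set T), PM A -> PM A -> \bar R.

Definition is_density (A : set (set T)) (Q P : PM A) (f : T -> R) : Prop :=
  [/\ measurable_fun (setT : set (g_sigma_algebraType A)) f,
      (forall t, (0 <= f t)%R) &
      forall S : set (g_sigma_algebraType A), measurable S ->
        Q S = \int[P]_(t in S) (f t)%:E].

Definition assumption_D (D : divergence) : Prop :=
  (forall A (Q P : PM A), 0 <= D A Q P) /\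
  [/\
      (forall A, sub_sigma A -> forall P : PM A, D A P P = 0),
      (forall A, sub_sigma A -> forall (Q P : PM A),
         (exists f, is_density Q P f /\ exists M : R, forall t, (f t <= M)%R) ->
         forall Mix : R -> PM A,
           (forall e : R, (0 <= e <= 1)%R ->
              forall S : set (g_sigma_algebraType A), measurable S ->
                Mix e S = e%:E * Q S + (1 - e)%:E * P S) ->
           {within `[0%R, 1%R], continuous (fun e : R => D A (Mix e) P)}),
      (forall A, sub_sigma A -> forall (Q P : PM A),
         D A Q P < +oo ->
         forall S : set (g_sigma_algebraType A), measurable S ->
           P S = 0 -> Q S = 0),
      (forall A E, sub_sigma A -> sub_sigma E -> E `<=` A ->
         forall (Q P : PM A) (QE PE : PM E),
           (forall S, E S -> QE S = Q S /\ PE S = P S) ->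
           D E QE PE <= D A Q P) &
      (forall A E, sub_sigma A -> sub_sigma E -> E `<=` A ->
         forall (Q P : PM A) (QE PE : PM E),
           (forall S, E S -> QE S = Q S /\ PE S = P S) ->
           (exists fE fA, is_density QE PE fE /\ is_density Q P fA /\
                          {ae P, forall t, fE t = fA t}) ->
           D E QE PE = D A Q P)].

Definition DB (D : divergence) (Q P : probability T R) : \bar R :=
  D (@BorTheta R a b hab) Q P.

Definition atomless (P : probability T R) : Prop :=
  forall S : set T, measurable S -> 0 < P S ->
    exists S' : set T, [/\ measurable S', S' `<=` S & 0 < P S' < P S].

(* allocation rule: x i t t' is the allocation of bidder i when his type is t
   and the other bidder's type is t'; ord0 = bidder 1, ord_max = bidder 2 *)
Definition allocation_rule (x : 'I_2 -> T -> T -> R) : Prop :=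
  [/\ (forall i, measurable_fun setT (fun p : T * T => x i p.1 p.2)),
      (exists M : R, forall i t t', (`|x i t t'| <= M)%R),
      (forall i t t', (0 <= x i t t')%R) &
      (forall t t', (x ord0 t t' + x ord_max t' t <= 1)%R)].

Definition Xint (P : probability T R) (x : 'I_2 -> T -> T -> R) i (t : T)
  : \bar R := \int[P]_t' (x i t t')%:E.

Definition feasible (D : divergence) (P : probability T R) (eta : R) :=
  [set Q : probability T R | DB D Q P <= eta%:E].

Definition Xmin D P eta (x : 'I_2 -> T -> T -> R) i (t : T) : \bar R :=
  ereal_inf [set \int[Q]_t' (x i t t')%:E | Q in feasible D P eta].

Definition assumption_X D P eta (x : 'I_2 -> T -> T -> R) : Prop :=
  forall i,
  [/\ (forall t t', t' <> t -> x i t t' = 0%R \/ x i t t' = 1%R),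
      (forall t, Xint P x i t = 1 -> val t = b) &
      (forall t t', (val t <= val t')%R -> Xmin D P eta x i t <= Xmin D P eta x i t')].

Definition assumption_T (alpha beta K : R) : Prop :=
  (0 <= alpha <= beta)%R /\ (beta <= 1)%R /\ (0 <= K)%R.

Definition interim_transfer (x : 'I_2 -> T -> T -> R) i (t : T) (tw tl : R)
  (t' : T) : R := (tw * x i t t' + tl * (1 - x i t t'))%R.

Definition interim_revenue P x i t tw tl : \bar R :=
  \int[P]_t' (interim_transfer x i t tw tl t')%:E.

Definition interim_Umin D P eta x i (t : T) tw tl : \bar R :=
  ereal_inf [set \int[Q]_t' ((val t * x i t t' - interim_transfer x i t tw tl t')%R)%:E
            | Q in feasible D P eta].

End Model.

(* Main.v *)
Require Import Defs.
From HB Require Import structures.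
From mathcomp Require Import all_boot all_order all_algebra.
From mathcomp Require Import all_classical all_reals all_analysis.
From mathcomp Require Import lra ring.
Import Order.TTheory GRing.Theory Num.Theory.
Local Open Scope classical_set_scope.
Local Open Scope ring_scope.
Lemma inf_affine (R : realType) (T : Type) (F : set T) (f : T -> R) (c d : R) :
  c <= 0 -> F !=set0 -> has_ubound (f @` F) ->
  ereal_inf [set (c * f Q - d)%:E | Q in F] = (c * sup (f @` F) - d)%:E.
Proof.
move=> c0 [Q0 FQ0] ub.
have hs : has_sup (f @` F) by split => //; exists (f Q0), Q0.
apply/eqP; rewrite eq_le; apply/andP; split.
- apply/lee_addgt0Pr => e e0.
  have e1 : 0 < e / (1 - c) by apply: divr_gt0 => //; lra.
  have [_ [Q FQ <-] hQ] := sup_adherent e1 hs.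
  apply: (le_trans (ereal_inf_lbound _)); first by exists Q.
  rewrite -EFinD lee_fin.
  have hle : f Q <= sup (f @` F) by apply: sup_upper_bound => //; exists Q.
  have : (1 - c) * (e / (1 - c)) = e by rewrite mulrC divfK //; apply/lt0r_neq0; lra.
  set u := e / (1 - c) in e1 hQ *.
  move=> hu. nra.
- apply: le_ereal_inf_tmp => _ [Q FQ <-].
  rewrite lee_fin.
  have hle : f Q <= sup (f @` F) by apply: sup_upper_bound => //; exists Q.
  nra.
Qed.
Lemma int_fin (R : realType) d (T : measurableType d) (Q : probability T R)
  (f : T -> R) (M : R) : measurable_fun setT f -> (forall t, `|f t| <= M) ->
  Q.-integrable setT (EFin \o f).
Proof.
move=> mf bf; apply: measurable_bounded_integrable => //.
  by change (Q setT < +oo)%E; rewrite probability_setT ltry.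
exists M; split; first exact: num_real.
move=> N hN y _; apply: le_trans (bf y) _; exact: ltW.
Qed.

Lemma lin_int (R : realType) d (T : measurableType d) (Q : probability T R)
  (f : T -> R) (M : R) : measurable_fun setT f -> (forall t, `|f t| <= M) ->
  forall u v, (\int[Q]_t (u * f t + v)%:E = (u * fine (\int[Q]_t (f t)%:E) + v)%:E)%E.
Proof.
move=> mf bf u v.
have hi := @int_fin R d T Q f M mf bf.
have hfin := integrable_fin_num measurableT hi.
under eq_integral do rewrite EFinD EFinM.
rewrite (integralD measurableT (integrableZl measurableT u hi)); last first.
  exact: (finite_measure_integrable_cst _ v measurableT).
rewrite integralZl // integral_cst // .
rewrite [X in (_ + _ * X)%E](_ : _ = 1%E); last exact: probability_setT.
rewrite mule1.
by rewrite EFinD EFinM fineK.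
Qed.

Lemma int_bound (R : realType) d (T : measurableType d) (Q : probability T R)
  (f : T -> R) (M : R) : measurable_fun setT f -> (forall t, `|f t| <= M) ->
  0 <= M -> fine (\int[Q]_t (f t)%:E)%E <= M.
Proof.
move=> mf bf M0.
have hi := @int_fin R d T Q f M mf bf.
have hfin := integrable_fin_num measurableT hi.
have mef := measurable_int _ hi.
rewrite -lee_fin fineK //.
apply: le_trans (lee_abs _) _.
apply: le_trans (le_abse_integral _ measurableT mef) _.
apply: le_trans (integral_le_bound (M%:E) measurableT mef _ _) _.
- by rewrite lee_fin.
- by apply: aeW => z _ /=; rewrite lee_fin.
- rewrite [X in (_ * X)%E](_ : _ = 1%E); last exact: probability_setT.
  by rewrite mule1.
Qed.

Theorem lemma3 (R : realType) (a b : R) (ha : 0 < a) (hab : a < b)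
  (D : divergence hab) (P : probability (Theta hab) R) (eta : R)
  (x : 'I_2 -> Theta hab -> Theta hab -> R) (alpha beta K : R) :
  assumption_D D -> atomless P -> 0 < eta ->
  allocation_rule x -> assumption_X D P eta x -> assumption_T alpha beta K ->
  forall (i : 'I_2) (t : Theta hab),
  (0 < Xint P x i t < 1)%E ->
  forall twb tlb : R,
  alpha * twb - beta * tlb <= K -> val t - twb < - tlb ->
  exists twt tlt : R,
    [/\ (interim_revenue P x i t twb tlb <= interim_revenue P x i t twt tlt)%E,
        interim_Umin D P eta x i t twt tlt = interim_Umin D P eta x i t twb tlb,
        alpha * twt - beta * tlt <= K &
        val t - twt = - tlt].
Proof.
move=> hD hatom heta hx hX hT i t hXint twb tlb h1 h2.
case: hx => hxm [Mx hMx] hx0 hx1.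
pose f := fun t' => x i t t'.
have mf : measurable_fun setT f.
  exact: (measurableT_comp (hxm i) (pair1_measurable t)).
have bf : forall t', `|f t'| <= Mx by move=> t'; exact: hMx.
have M0 : 0 <= Mx by apply: le_trans (hMx i t t); exact: normr_ge0.
pose r := fun Q : probability (Theta hab) R => fine (\int[Q]_t' (f t')%:E)%E.
have hint : forall (Q : probability (Theta hab) R) u v, (\int[Q]_t' (u * f t' + v)%:E = (u * r Q + v)%:E)%E.
  by move=> Q; exact: (@lin_int R _ _ Q f Mx mf bf).
have hrb : forall Q : probability (Theta hab) R, r Q <= Mx := fun Q => @int_bound R _ _ Q f Mx mf bf M0.
have FP : feasible D P eta P.
  rewrite /feasible /DB /=.
  case: hD => _ [D1 _ _ _ _].
  have sB : sub_sigma (@BorTheta R a b hab).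
    split; last exact: sub_gen_smallest.
    apply: sigma_algebra_preimage; exact: sigma_algebra_measurable.
  by rewrite (D1 _ sB P) lee_fin; exact: ltW.
pose X := r P.
have hXe : Xint P x i t = X%:E.
  rewrite /X /r fineK //.
  exact: (integrable_fin_num measurableT (@int_fin R _ _ P f Mx mf bf)).
have X0 : 0 < X by move: hXint; rewrite hXe => /andP[+ _]; rewrite lte_fin.
pose S := r @` feasible D P eta.
have ub : has_ubound S by exists Mx => _ [Q _ <-]; exact: hrb.
have ne : feasible D P eta !=set0 by exists P.
pose m := sup S.
have Xm : X <= m by apply: sup_upper_bound; [split; [exists X, P|] | exists P].
have hU : forall tw tl, val t - tw + tl <= 0 ->
    interim_Umin D P eta x i t tw tl = ((val t - tw + tl) * m - tl)%:E.
  move=> tw tl hc; rewrite /interim_Umin -(@inf_affine R _ _ r _ tl hc ne ub).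
  congr ereal_inf; apply: eq_imagel => Q _.
  rewrite -hint; apply: eq_integral => t' _; congr EFin.
  rewrite /interim_transfer /f; ring.
have hR : forall tw tl, interim_revenue P x i t tw tl = ((tw - tl) * X + tl)%:E.
  move=> tw tl; rewrite /interim_revenue -hint; apply: eq_integral => t' _; congr EFin.
  rewrite /interim_transfer /f; ring.
pose c := val t - twb + tlb.
have c0 : c < 0 by rewrite /c; lra.
exists (val t + (tlb - c * m)), (tlb - c * m).
case: hT => /andP[a0 ab] [b1 K0].
split.
- rewrite !hR lee_fin.
  have : c * (X - m) >= 0 by apply: mulr_le0 => //; [exact: ltW | lra].
  rewrite /c; nra.
- rewrite !hU; [ |rewrite -/c; exact: ltW|lra].
  congr EFin; rewrite -/c; ring.
- have hm : 0 < m by lra.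
  have : c * (alpha + (beta - alpha) * m) <= 0.
    apply: mulr_le0_ge0; first exact: ltW.
    have : 0 <= (beta - alpha) * m by apply: mulr_ge0; lra.
    lra.
  move: h1; rewrite /c; nra.
- ring.
Qed.
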